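(* Let $\Pi$ be a program and $e=(e_{in},e_{out})$ an example with $[\![\Pi]\!]e_{in}\neq e_{out}$, and let $\mathcal{P}\subseteq\mathcal{U}$ be such that $e_{out}\in\gamma(\mathrm{EvalAbstract}(\Pi,e_{in},\mathcal{P}))$. Then the mapping $\mathcal{I}$ returned by $\textsc{ConstructProof}(\Pi,e,\mathcal{P},\mathcal{U})$ is a proof of incorrectness of $\Pi$ with respect to $e$. That is: (1) for every leaf $v$ labelled by terminal $t$, $(t=[\![t]\!]e_{in})\sqsubseteq\mathcal{I}(v)$; (2) for every internal node $v$ labelled $f$ with children $v_1,\dots,v_n$, $[\![f(\mathcal{I}(v_1),\dots,\mathcal{I}(v_n))]\!]^\#\sqsubseteq\mathcal{I}(v)$; (3) $e_{out}\notin\gamma(\mathcal{I}(\mathrm{root}(\Pi)))$.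
   Context: A DSL is given by a context-free grammar $G$ with start symbol $s_0$. Productions have the form $s\to t$, where $t$ is the input variable $x$ or a constant, or $s\to f(s_1,\dots,s_n)$. Programs are finite ASTs derived from $s_0$, and each node carries the grammar symbol it derives from. Concrete semantics: $[\![x]\!]c=c$; $[\![t]\!]$ is the value of constant $t$ (we write $[\![x]\!]e_{in}=e_{in}$); $[\![f(\Pi_1,\dots,\Pi_n)]\!]c=[\![f]\!]([\![\Pi_1]\!]c,\dots,[\![\Pi_n]\!]c)$. A predicate over grammar symbol $s$ is a formula with sole free variable $s$. An abstract value is a conjunction of predicates ($\mathit{true}$ is the empty one), $\gamma(\varphi)$ is its set of satisfying values, and $\varphi\sqsubseteq\varphi'$ iff $\varphi\Rightarrow\varphi'$. $\alpha^{\mathcal{P}}(\varphi)$ is the conjunction of all $p\in\mathcal{P}$ (over the relevant symbol) with $\varphi\Rightarrow p$. $\mathcal{U}$ is the universe of predicates, and an abstract value over $\mathcal{U}$ is a conjunction of predicates from $\mathcal{U}$. It is assumed that $\mathcal{U}$ contains every equality predicate $s=c$. Each $f$ has an abstract transformer $[\![f(\varphi_1,\dots,\varphi_n)]\!]^\#$ satisfying three properties. It is sound: $c_i\in\gamma(\varphi_i)$ implies $[\![f]\!](\vec c)\in\gamma([\![f(\vec\varphi)]\!]^\#)$. It is monotone with respect to $\sqsubseteq$. It is precise on concrete inputs: $[\![f(s_1=c_1,\dots,s_n=c_n)]\!]^\#\sqsubseteq(s=[\![f]\!](c_1,\dots,c_n))$. $\mathrm{EvalAbstract}(\Pi,c,\mathcal{P})$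 is defined recursively: $\alpha^{\mathcal{P}}(x=c)$ for leaf $x$; $\alpha^{\mathcal{P}}(t=[\![t]\!])$ for leaf constant $t$; $\alpha^{\mathcal{P}}([\![f(\mathrm{EvalAbstract}(\Pi_1,c,\mathcal{P}),\dots,\mathrm{EvalAbstract}(\Pi_n,c,\mathcal{P}))]\!]^\#)$ for a node $f(\Pi_1,\dots,\Pi_n)$. A fixed integer $k\ge1$ bounds conjunction lengths. $\mathrm{StrengthenRoot}(p_+,p_-,\varphi,\mathcal{U})$ works as follows. Let $\Phi=\{p\in\mathcal{U}: p_+\Rightarrow p\}$, and let $\Psi$ be the set of conjunctions of at most $k+1$ elements of $\Phi$. Start with $\psi^*:=p_+$. Iterate over $\psi\in\Psi$, replacing $\psi^*$ by $\psi$ whenever $\psi^*\Rightarrow\psi$ and $(\varphi\wedge\psi)\Rightarrow p_-$. Return $\psi^*$. $\mathrm{StrengthenChildren}(\vec\phi,\vec\varphi,\varphi_p,\mathcal{U},f)$ works as follows, with $\vec\phi=(\phi_1,\dots,\phi_n)$ and $\vec\varphi=(\varphi_1,\dots,\varphi_n)$. Let $\Phi_i=\{p\in\mathcal{U}:\phi_i\Rightarrow p\}$, and let $\Psi_i$ be the set of conjunctions of at most $k+1$ elements of $\Phi_i$. Start with $\vec\psi^*:=\vec\phi$. Iterate over all tuples $\vec\psi$ with $\psi_i\in\Psi_i$, replacing $\vec\psi^*$ by $\vec\psi$ whenever $\psi^*_i\Rightarrow\psi_i$ for all $i$ and $[\![f(\varphi_1\wedge\psi_1,\dots,\varphi_n\wedge\psi_n)]\!]^\#\Rightarrow\varphi_p$.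 Return $\vec\psi^*$. $\textsc{ConstructProof}(\Pi,e,\mathcal{P},\mathcal{U})$ works in two phases. First, for the root $r$: let $\varphi=\mathrm{EvalAbstract}(\Pi,e_{in},\mathcal{P})$ and $\psi=\mathrm{StrengthenRoot}(s_0=[\![\Pi]\!]e_{in},\ s_0\neq e_{out},\ \varphi,\ \mathcal{U})$, and set $\mathcal{I}(r)=\varphi\wedge\psi$. Then it processes a worklist initialised to $\{r\}$. While the worklist is nonempty, it removes a node $cur$, labelled $f$, with child subtrees $\Pi_1,\dots,\Pi_n$. It sets $\phi_i=(s_i=[\![\Pi_i]\!]e_{in})$, where $s_i$ is the grammar symbol of the root of $\Pi_i$, and $\varphi_i=\mathrm{EvalAbstract}(\Pi_i,e_{in},\mathcal{P})$. It computes $\vec\psi=\mathrm{StrengthenChildren}(\vec\phi,\vec\varphi,\mathcal{I}(cur),\mathcal{U},f)$ and sets $\mathcal{I}(\mathrm{root}(\Pi_i))=\varphi_i\wedge\psi_i$ for each $i$. Each non-leaf $\mathrm{root}(\Pi_i)$ is added to the worklist. Finally it returns $\mathcal{I}$. *)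

(* Defs.v *)
From Stdlib Require Import List Arith ClassicalEpsilon.
Import ListNotations.
Set Implicit Arguments.

(** A DSL with its concrete and abstract semantics (data only; the
    required properties are hypotheses of the theorem). *)
Record DSL := {
  Sym : Type;
  Val : Type;
  Const : Type;
  Fn : Type;
  cval : Const -> Val;
  fsem : Fn -> list Val -> Val;
  Pred : Type;                       (* predicates (formulas in one free variable) *)
  psym : Pred -> Sym;
  psem : Pred -> Val -> Prop;
  peq : Sym -> Val -> Pred;
  absf : Fn -> list (list Pred) -> list Pred
}.

Arguments cval {d} _.
Arguments fsem {d} _ _.
Arguments psym {d} _.
Arguments psem {d} _ _.
Arguments peq {d} _ _.
Arguments absf {d} _ _.

Section Defs.
Variable D : DSL.

(** abstract values: finite conjunctions of predicates ([] = true) *)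
Definition AbsVal := list (Pred D).

Definition gamma (phi : AbsVal) (v : Val D) : Prop := Forall (fun p => psem p v) phi.

Definition aleq (phi phi' : AbsVal) : Prop := forall v, gamma phi v -> gamma phi' v.

Inductive Term := TIn | TConst (t : Const D).

Inductive Prog :=
| Leaf (s : Sym D) (t : Term)
| Node (s : Sym D) (f : Fn D) (ch : list Prog).

Definition rsym (p : Prog) : Sym D :=
  match p with Leaf s _ => s | Node s _ _ => s end.

Inductive Production :=
| PTerm (s : Sym D) (t : Term)
| PApp (s : Sym D) (f : Fn D) (ss : list (Sym D)).

Fixpoint derivable (G : Production -> Prop) (p : Prog) : Prop :=
  match p with
  | Leaf s t => G (PTerm s t)
  | Node s f ch =>
      G (PApp s f (map rsym ch)) /\
      (fix all (l : list Prog) : Prop :=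
         match l with [] => True | q :: l' => derivable G q /\ all l' end) ch
  end.

Definition IsProgram (G : Production -> Prop) (s0 : Sym D) (p : Prog) : Prop :=
  rsym p = s0 /\ derivable G p.

Definition evalTerm (t : Term) (c : Val D) : Val D :=
  match t with TIn => c | TConst t => cval t end.

Fixpoint eval (p : Prog) (c : Val D) : Val D :=
  match p with
  | Leaf _ t => evalTerm t c
  | Node _ f ch => fsem f (map (fun q => eval q c) ch)
  end.

Definition decide (P : Prop) : bool :=
  if excluded_middle_informative P then true else false.

Definition alpha (P : list (Pred D)) (s : Sym D) (phi : AbsVal) : AbsVal :=
  filter (fun p => decide (psym p = s /\ aleq phi [p])) P.

Fixpoint EvalAbstract (p : Prog) (c : Val D) (P : list (Pred D)) : AbsVal :=
  match p with
  | Leaf s t => alpha P s [peq s (evalTerm t c)]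
  | Node s f ch => alpha P s (absf f (map (fun q => EvalAbstract q c P) ch))
  end.

Definition InPsi (U : Pred D -> Prop) (k : nat) (s : Sym D) (base : AbsVal)
  (psi : AbsVal) : Prop :=
  length psi <= k + 1 /\ Forall (fun p => U p /\ psym p = s /\ aleq base [p]) psi.

Definition Enumerates (X : Type) (S : X -> Prop) (ord : list X) : Prop :=
  forall x, In x ord <-> S x.

Definition StrengthenRoot (ord : list AbsVal) (pplus : Pred D)
  (pminus : Val D -> Prop) (phi : AbsVal) : AbsVal :=
  fold_left (fun cur psi =>
     if decide (aleq cur psi /\ (forall v, gamma (phi ++ psi) v -> pminus v))
     then psi else cur) ord [pplus].

Definition RootPsi (U : Pred D -> Prop) (k : nat) (pplus : Pred D) : AbsVal -> Prop :=
  InPsi U k (psym pplus) [pplus].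

Definition conjs (a b : list AbsVal) : list AbsVal :=
  map (fun '(x, y) => x ++ y) (combine a b).

Definition StrengthenChildren (ord : list (list AbsVal)) (phis varphis : list AbsVal)
  (phip : AbsVal) (f : Fn D) : list AbsVal :=
  fold_left (fun cur psis =>
     if decide (Forall2 aleq cur psis /\ aleq (absf f (conjs varphis psis)) phip)
     then psis else cur) ord phis.

Definition ChildPsiTuples (U : Pred D -> Prop) (k : nat) (ein : Val D)
  (ch : list Prog) (psis : list AbsVal) : Prop :=
  Forall2 (fun q psi => InPsi U k (rsym q) [peq (rsym q) (eval q ein)] psi) ch psis.

Definition childPhis (ein : Val D) (ch : list Prog) : list AbsVal :=
  map (fun q => [peq (rsym q) (eval q ein)]) ch.

Definition childVarphis (ein : Val D) (P : list (Pred D)) (ch : list Prog) : list AbsVal :=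
  map (fun q => EvalAbstract q ein P) ch.

(** nodes are addressed by paths (lists of child indices) from the root *)
Fixpoint subtree (p : Prog) (path : list nat) : option Prog :=
  match path with
  | [] => Some p
  | i :: path' =>
      match p with
      | Leaf _ _ => None
      | Node _ _ ch => match nth_error ch i with
                       | None => None
                       | Some q => subtree q path'
                       end
      end
  end.

(** The worklist processing is unrolled top-down: the
    value I(v) of a node v is computed once, when its parent is processed,
    from I(parent) only; so the order of the worklist is irrelevant.
    [ordC pos] is the iteration order used by StrengthenChildren at the
    node at path [pos]. *)
Fixpoint walk (ein : Val D) (P : list (Pred D)) (ordC : list nat -> list (list AbsVal))
  (p : Prog) (pos : list nat) (Icur : AbsVal) (rest : list nat) : AbsVal :=
  match rest with
  | [] => Icur
  | i :: rest' =>
      match p with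
      | Leaf _ _ => []
      | Node _ f ch =>
          let varphis := childVarphis ein P ch in
          let psis := StrengthenChildren (ordC pos) (childPhis ein ch) varphis Icur f in
          match nth_error ch i with
          | None => []
          | Some q => walk ein P ordC q (pos ++ [i])
                        (nth i varphis [] ++ nth i psis []) rest'
          end
      end
  end.

Definition ConstructProof (p : Prog) (ein eout : Val D) (P : list (Pred D))
  (ordR : list AbsVal) (ordC : list nat -> list (list AbsVal)) : list nat -> AbsVal :=
  let varphi := EvalAbstract p ein P in
  let psi := StrengthenRoot ordR (peq (rsym p) (eval p ein)) (fun v => v <> eout) varphi in
  fun path => walk ein P ordC p [] (varphi ++ psi) path.

End Defs.

(* Main.v *)
Require Import Defs.
From Stdlib Require Import List Arith Lia ClassicalEpsilon.
Import ListNotations.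

Lemma decide_true (Q : Prop) : decide Q = true -> Q.
Proof. unfold decide. destruct (excluded_middle_informative Q); congruence. Qed.

Lemma gamma_app D (a b : AbsVal D) v : gamma (a ++ b) v <-> gamma a v /\ gamma b v.
Proof. unfold gamma. apply Forall_app. Qed.

Lemma aleq_refl D (a : AbsVal D) : aleq a a.
Proof. intros v h; exact h. Qed.

Lemma aleq_trans D (a b c : AbsVal D) : aleq a b -> aleq b c -> aleq a c.
Proof. intros h1 h2 v h; auto. Qed.

Lemma aleq_app_r D (x a b : AbsVal D) : aleq x a -> aleq x b -> aleq x (a ++ b).
Proof. intros h1 h2 v h; apply gamma_app; auto. Qed.

Lemma aleq_appl D (a b : AbsVal D) : aleq (a ++ b) a.
Proof. intros v h; apply gamma_app in h; tauto. Qed.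

Lemma aleq_appr D (a b : AbsVal D) : aleq (a ++ b) b.
Proof. intros v h; apply gamma_app in h; tauto. Qed.

Lemma alpha_ge D (P : list (Pred D)) s phi : aleq phi (alpha P s phi).
Proof.
  intros v h. unfold gamma, alpha. apply Forall_forall. intros p hp.
  apply filter_In in hp as [_ hp]. apply decide_true in hp as [_ hp].
  specialize (hp v h). inversion hp; auto.
Qed.

Lemma SR_ge D (ord : list (AbsVal D)) pplus pminus phi :
  aleq [pplus] (StrengthenRoot ord pplus pminus phi).
Proof.
  unfold StrengthenRoot. generalize (aleq_refl _ [pplus]).
  generalize [pplus] at 2 4. induction ord as [|x ord IH]; intros cur h; simpl; auto.
  apply IH. destruct (decide _) eqn:E; auto.
  apply decide_true in E as [E _]. eapply aleq_trans; eauto.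
Qed.

Lemma SR_inv D (ord : list (AbsVal D)) pplus (pminus : Val D -> Prop) phi :
  (forall v, gamma (phi ++ [pplus]) v -> pminus v) ->
  forall v, gamma (phi ++ StrengthenRoot ord pplus pminus phi) v -> pminus v.
Proof.
  unfold StrengthenRoot. generalize [pplus].
  induction ord as [|x ord IH]; intros cur h; simpl; auto.
  apply IH. destruct (decide _) eqn:E; auto.
  apply decide_true in E as [_ E]. auto.
Qed.

Lemma Forall2_trans_aleq D (a b c : list (AbsVal D)) :
  Forall2 (@aleq D) a b -> Forall2 (@aleq D) b c -> Forall2 (@aleq D) a c.
Proof.
  intros h; revert c; induction h; intros c h2; inversion h2; subst; constructor; eauto using aleq_trans.
Qed.

Lemma Forall2_refl_aleq D (a : list (AbsVal D)) : Forall2 (@aleq D) a a.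
Proof. induction a; constructor; auto using aleq_refl. Qed.

Lemma SC_ge D (ord : list (list (AbsVal D))) phis varphis phip f :
  Forall2 (@aleq D) phis (StrengthenChildren ord phis varphis phip f).
Proof.
  unfold StrengthenChildren. generalize (Forall2_refl_aleq _ phis).
  generalize phis at 2 4. induction ord as [|x ord IH]; intros cur h; simpl; auto.
  apply IH. destruct (decide _) eqn:E; auto.
  apply decide_true in E as [E _]. eapply Forall2_trans_aleq; eauto.
Qed.

Lemma SC_inv D (ord : list (list (AbsVal D))) phis varphis phip f :
  aleq (absf f (conjs varphis phis)) phip ->
  aleq (absf f (conjs varphis (StrengthenChildren ord phis varphis phip f))) phip.
Proof.
  unfold StrengthenChildren. revert phis.
  induction ord as [|x ord IH]; intros cur h; simpl; auto.
  apply IH. destruct (decide _) eqn:E; auto.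
  apply decide_true in E as [_ E]. auto.
Qed.

Lemma subtree_app D (p : Prog D) a b :
  subtree p (a ++ b) = match subtree p a with Some q => subtree q b | None => None end.
Proof.
  revert p; induction a as [|i a IH]; intros p; simpl; auto.
  destruct p; auto. destruct (nth_error ch i); auto.
Qed.

Lemma walk_app D ein P ordC : forall rest (p : Prog D) pos Icur q x,
  subtree p rest = Some q ->
  walk ein P ordC p pos Icur (rest ++ x) = walk ein P ordC q (pos ++ rest) (walk ein P ordC p pos Icur rest) x.
Proof.
  induction rest as [|i rest IH]; intros p pos Icur q x h.
  - simpl in h. injection h as <-. simpl. rewrite app_nil_r. reflexivity.
  - simpl in h. destruct p as [s t|s f ch]; [discriminate|].
    destruct (nth_error ch i) as [q'|] eqn:E; [|discriminate].
    simpl. rewrite E. rewrite (IH _ _ _ _ _ h). rewrite <- app_assoc. reflexivity.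
Qed.

Lemma Forall2_nth_error {A B} (R : A -> B -> Prop) l1 l2 i a :
  Forall2 R l1 l2 -> nth_error l1 i = Some a -> exists b, nth_error l2 i = Some b /\ R a b.
Proof.
  intros h; revert i; induction h; intros [|i] e; simpl in *; try discriminate.
  - injection e as <-; eauto.
  - eauto.
Qed.

Lemma conjs_nth D (a b : list (AbsVal D)) :
  length a = length b ->
  conjs a b = map (fun i => nth i a [] ++ nth i b []) (seq 0 (length a)).
Proof.
  revert b; induction a as [|x a IH]; intros [|y b] h; simpl in *; try discriminate; auto.
  unfold conjs in *. simpl. f_equal. rewrite IH by lia.
  rewrite <- seq_shift, map_map. reflexivity.
Qed.

Lemma conjs_l D (a b : list (AbsVal D)) : length a = length b -> Forall2 (@aleq D) (conjs a b) a.
Proof.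
  revert b; induction a as [|x a IH]; intros [|y b] h; simpl in *; try discriminate; constructor.
  apply aleq_appl. apply IH; lia.
Qed.

Lemma conjs_r D (a b : list (AbsVal D)) : length a = length b -> Forall2 (@aleq D) (conjs a b) b.
Proof.
  revert b; induction a as [|x a IH]; intros [|y b] h; simpl in *; try discriminate; constructor.
  apply aleq_appr. apply IH; lia.
Qed.

Lemma childPhis_combine D ein (ch : list (Prog D)) :
  childPhis ein ch = map (fun '(si, ci) => [peq si ci]) (combine (map (@rsym D) ch) (map (fun q => eval q ein) ch)).
Proof. induction ch; simpl; f_equal; auto. Qed.
Theorem mainTheorem4 (D : DSL) (G : Production D -> Prop) (s0 : Sym D) (k : nat)
  (U : Pred D -> Prop) (P : list (Pred D)) (Pi : Prog D) (ein eout : Val D)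
  (ordR : list (AbsVal D)) (ordC : list nat -> list (list (AbsVal D))) :
  (* equality predicates and the universe *)
  (forall (s : Sym D) c, psym (peq s c) = s) ->
  (forall (s : Sym D) c v, psem (peq s c) v <-> v = c) ->
  (forall (s : Sym D) c, U (peq s c)) ->
  (* abstract transformers: sound, monotone, precise on concrete inputs *)
  (forall f (phis : list (AbsVal D)) (cs : list (Val D)),
      Forall2 (fun phi c => gamma phi c) phis cs -> gamma (absf f phis) (fsem f cs)) ->
  (forall f (phis phis' : list (AbsVal D)),
      Forall2 (@aleq D) phis phis' -> aleq (absf f phis) (absf f phis')) ->
  (forall f (ss : list (Sym D)) (cs : list (Val D)) (s : Sym D),
      length ss = length cs ->
      aleq (absf f (map (fun '(si, ci) => [peq si ci]) (combine ss cs))) [peq s (fsem f cs)]) ->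
  1 <= k ->
  (* the hypotheses of the theorem *)
  IsProgram G s0 Pi ->
  eval Pi ein <> eout ->
  (forall p, In p P -> U p) ->
  gamma (EvalAbstract Pi ein P) eout ->
  (* the iteration orders used by StrengthenRoot / StrengthenChildren *)
  Enumerates (RootPsi U k (peq (rsym Pi) (eval Pi ein))) ordR ->
  (forall path s f ch, subtree Pi path = Some (Node s f ch) ->
      Enumerates (ChildPsiTuples U k ein ch) (ordC path)) ->
  let I := ConstructProof Pi ein eout P ordR ordC in
  (forall path s t, subtree Pi path = Some (Leaf s t) ->
      aleq [peq s (evalTerm t ein)] (I path)) /\
  (forall path s f ch, subtree Pi path = Some (Node s f ch) ->
      aleq (absf f (map (fun i => I (path ++ [i])) (seq 0 (length ch)))) (I path)) /\
  ~ gamma (I []) eout.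
Proof.
  intros heqsym heqsem hU hsound hmono hprec hk hprog hneq hP hgam hordR hordC I.
  set (I0 := EvalAbstract Pi ein P ++ StrengthenRoot ordR (peq (rsym Pi) (eval Pi ein))
               (fun v => v <> eout) (EvalAbstract Pi ein P)).
  assert (HI : forall path, I path = walk ein P ordC Pi [] I0 path) by reflexivity.
  assert (Hstep : forall path s f ch i q, subtree Pi path = Some (Node s f ch) ->
     nth_error ch i = Some q ->
     I (path ++ [i]) = nth i (childVarphis ein P ch) [] ++
        nth i (StrengthenChildren (ordC path) (childPhis ein ch) (childVarphis ein P ch) (I path) f) []).
  { intros path s f ch i q H Ei. rewrite !HI. erewrite walk_app by exact H.
    simpl. rewrite Ei. reflexivity. }
  assert (inv : forall path node, subtree Pi path = Some node -> exists psi,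
     I path = EvalAbstract node ein P ++ psi /\ aleq [peq (rsym node) (eval node ein)] psi).
  { intros path. induction path as [|i path _] using rev_ind; intros node H.
    - simpl in H. injection H as <-. exists (StrengthenRoot ordR (peq (rsym Pi) (eval Pi ein))
               (fun v => v <> eout) (EvalAbstract Pi ein P)). split; [reflexivity|].
      apply SR_ge.
    - rewrite subtree_app in H. destruct (subtree Pi path) as [par|] eqn:Ep; [|discriminate].
      destruct par as [s t|s f ch]; simpl in H; [discriminate|].
      destruct (nth_error ch i) as [q|] eqn:Ei; [|discriminate]. injection H as <-.
      rewrite (Hstep _ _ _ _ _ _ Ep Ei).
      eexists. split.
      + f_equal. unfold childVarphis. apply nth_error_nth.
        apply (map_nth_error (fun q0 => EvalAbstract q0 ein P)). exact Ei.
      + assert (Hn : nth_error (childPhis ein ch) i = Some [peq (rsym q) (eval q ein)]).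
        { unfold childPhis. apply (map_nth_error (fun q0 => [peq (rsym q0) (eval q0 ein)])). exact Ei. }
        destruct (Forall2_nth_error _ _ _ _ _ (SC_ge _ (ordC path) (childPhis ein ch)
             (childVarphis ein P ch) (I path) f) Hn) as [b [Hb Rb]].
        erewrite nth_error_nth by exact Hb. exact Rb. }
  split; [|split].
  - intros path s t H. destruct (inv _ _ H) as [psi [-> hpsi]].
    simpl EvalAbstract. apply aleq_app_r; [apply alpha_ge | exact hpsi].
  - intros path s f ch H. destruct (inv _ _ H) as [psi [Hp hpsi]].
    set (varphis := childVarphis ein P ch).
    set (psis := StrengthenChildren (ordC path) (childPhis ein ch) varphis (I path) f).
    assert (Hl1 : length varphis = length ch) by (apply length_map).
    assert (Hl2 : length (childPhis ein ch) = length ch) by (apply length_map).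
    assert (Hl3 : length psis = length ch).
    { rewrite <- Hl2. symmetry. eapply Forall2_length. apply SC_ge. }
    assert (Hm : map (fun i => I (path ++ [i])) (seq 0 (length ch)) = conjs varphis psis).
    { rewrite conjs_nth by congruence. rewrite Hl1. apply map_ext_in.
      intros i Hi. apply in_seq in Hi.
      destruct (nth_error ch i) as [q|] eqn:Ei.
      - exact (Hstep _ _ _ _ _ _ H Ei).
      - apply nth_error_None in Ei. lia. }
    rewrite Hm. unfold psis. apply SC_inv.
    rewrite Hp. simpl EvalAbstract. apply aleq_app_r.
    + eapply aleq_trans; [apply hmono; apply conjs_l; congruence|]. apply alpha_ge.
    + eapply aleq_trans; [apply hmono; apply conjs_r; congruence|].
      rewrite childPhis_combine.
      eapply aleq_trans; [apply (hprec f _ _ s); rewrite !length_map; reflexivity|].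
      exact hpsi.
  - rewrite HI. simpl. intro hg.
    refine (SR_inv _ ordR (peq (rsym Pi) (eval Pi ein)) (fun v => v <> eout) _ _ eout hg eq_refl).
    intros v hv. apply gamma_app in hv as [_ hv]. inversion hv; subst.
    apply heqsem in H1. congruence.
Qed.
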